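(* Let $(S,\omega)$ be a real symplectic vector space with positive polarization $E$ and associated complex structure $j$. For every unitary $h\in U(E)$ such that $h-\mathrm{id}$ is invertible, $$ {\det}^{1/2}\big(\tfrac12\mathrm{id}+iA(\iota(h))\big)=\frac{1}{\det(\mathrm{id}-h^{-1})}.$$
   Context: A positive polarization of $S$ is a Lagrangian subspace $E\subset S\otimes\mathbb C$ with $\frac1i\omega(x,\bar x)>0$ for all nonzero $x\in E$; $E$ carries the Hermitian product $(x,y)\mapsto\frac1i\omega(x,\bar y)$ and $U(E)$ is its unitary group. Let $j$ be the complex structure on $S$ with $E=\ker(j-i\,\mathrm{id})\subset S\otimes\mathbb C$; $\mathrm{sym}(S,j)$ is the space of endomorphisms of $S$ symmetric for the scalar product $\omega(X,jY)$; for $A\in\mathrm{sym}(S,j)$, ${\det}^{1/2}(\tfrac12\mathrm{id}+iA)$ is the square root of $\det(\tfrac12\mathrm{id}+iA)$ depending continuously on $A$ and positive at $A=0$. For $g\in\mathrm{Sp}(S)$ with $\mathrm{id}-g$ invertible, $A(g):=\tfrac12(\mathrm{id}+g)(\mathrm{id}-g)^{-1}j\in\mathrm{sym}(S,j)$. The map $\iota:U(E)\to\mathrm{Sp}(S)$ sends $h$ to the linear symplectomorphism $g$ of $S$ whose complexification acts as $h$ on $E$ and as $\bar h$ on $\overline E$ (its image is the set of elements commuting with $j$). *)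

(* Defs.v *)
From Stdlib Require Import Reals List.
Open Scope R_scope.

Record Cplx := mkC { Cre : R; Cim : R }.
Definition C0 : Cplx := mkC 0 0.
Definition C1 : Cplx := mkC 1 0.
Definition Ci : Cplx := mkC 0 1.
Definition RC (x : R) : Cplx := mkC x 0.
Definition Cadd (z w : Cplx) : Cplx := mkC (Cre z + Cre w) (Cim z + Cim w).
Definition Copp (z : Cplx) : Cplx := mkC (- Cre z) (- Cim z).
Definition Csub (z w : Cplx) : Cplx := Cadd z (Copp w).
Definition Cmul (z w : Cplx) : Cplx :=
  mkC (Cre z * Cre w - Cim z * Cim w) (Cre z * Cim w + Cim z * Cre w).
Definition Cconj (z : Cplx) : Cplx := mkC (Cre z) (- Cim z).
Definition Cnorm (z : Cplx) : R := sqrt (Cre z ^ 2 + Cim z ^ 2).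
(* multiplicative inverse (the value at 0 is irrelevant) *)
Definition Cinv (z : Cplx) : Cplx :=
  let d := Cre z ^ 2 + Cim z ^ 2 in mkC (Cre z / d) (- Cim z / d).

Definition Rsum (n : nat) (f : nat -> R) : R := fold_right Rplus 0 (map f (seq 0 n)).
Definition Csum (n : nat) (f : nat -> Cplx) : Cplx := fold_right Cadd C0 (map f (seq 0 n)).

(* ---------- vectors and matrices (entries outside the size are ignored) ---------- *)
Definition Rvec := nat -> R.
Definition Cvec := nat -> Cplx.
Definition Rmat := nat -> nat -> R.
Definition Cmat := nat -> nat -> Cplx.

Definition Rid : Rmat := fun i k => if Nat.eqb i k then 1 else 0.
Definition Cid : Cmat := fun i k => if Nat.eqb i k then C1 else C0.
Definition Rzero : Rmat := fun _ _ => 0.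

Definition Radd_m (A B : Rmat) : Rmat := fun i k => A i k + B i k.
Definition Rsub_m (A B : Rmat) : Rmat := fun i k => A i k - B i k.
Definition Rscale_m (c : R) (A : Rmat) : Rmat := fun i k => c * A i k.
Definition Rmul_m (p : nat) (A B : Rmat) : Rmat := fun i k => Rsum p (fun l => A i l * B l k).
Definition Rmv (p : nat) (A : Rmat) (x : Rvec) : Rvec := fun i => Rsum p (fun l => A i l * x l).

Definition Csub_m (A B : Cmat) : Cmat := fun i k => Csub (A i k) (B i k).
Definition Cmul_m (p : nat) (A B : Cmat) : Cmat := fun i k => Csum p (fun l => Cmul (A i l) (B l k)).
Definition Cmv (p : nat) (A : Cmat) (x : Cvec) : Cvec := fun i => Csum p (fun l => Cmul (A i l) (x l)).
Definition Cconj_m (A : Cmat) : Cmat := fun i k => Cconj (A i k).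
Definition complexify (A : Rmat) : Cmat := fun i k => RC (A i k).

Definition Rmat_eq (m n : nat) (A B : Rmat) : Prop :=
  forall i k, (i < m)%nat -> (k < n)%nat -> A i k = B i k.
Definition Cmat_eq (m n : nat) (A B : Cmat) : Prop :=
  forall i k, (i < m)%nat -> (k < n)%nat -> A i k = B i k.

Definition Cinvertible (n : nat) (A : Cmat) : Prop :=
  exists N, Cmat_eq n n (Cmul_m n A N) Cid /\ Cmat_eq n n (Cmul_m n N A) Cid.

(* determinant of the n x n upper-left block, by Laplace expansion along row 0 *)
Definition Csign (k : nat) : Cplx := if Nat.even k then C1 else Copp C1.
Fixpoint Cdet (n : nat) (M : Cmat) : Cplx :=
  match n with
  | O => C1
  | S n' => Csum n (fun k => Cmul (Cmul (Csign k) (M O k))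
                    (Cdet n' (fun i l => M (S i) (if Nat.ltb l k then l else S l))))
  end.

(* ---------- the symplectic space S = R^m with form omega (matrix w) ---------- *)
Definition omegaR (m : nat) (w : Rmat) (x y : Rvec) : R :=
  Rsum m (fun i => Rsum m (fun k => x i * w i k * y k)).
(* complex-bilinear extension of omega to S (x) Cplx = Cplx^m *)
Definition omegaC (m : nat) (w : Rmat) (x y : Cvec) : Cplx :=
  Csum m (fun i => Csum m (fun k => Cmul (Cmul (x i) (RC (w i k))) (y k))).
(* the Hermitian product (x,y) |-> (1/i) omega(x, conj y);  1/i = -i *)
Definition hermE (m : nat) (w : Rmat) (x y : Cvec) : Cplx :=
  Cmul (Copp Ci) (omegaC m w x (fun i => Cconj (y i))).

Definition symplectic_form (m : nat) (w : Rmat) : Prop :=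
  (forall i k, (i < m)%nat -> (k < m)%nat -> w k i = - w i k) /\
  exists W, Rmat_eq m m (Rmul_m m w W) Rid /\ Rmat_eq m m (Rmul_m m W w) Rid.

(* E := column span of the m x n complex matrix B (columns a basis of E).
   E is a positive polarization: Lagrangian (isotropic, dim E = m/2, the
   latter imposed by m = 2n and independence of the columns) and
   (1/i) omega(x, conj x) > 0 for nonzero x in E. *)
Definition positive_polarization (m n : nat) (w : Rmat) (B : Cmat) : Prop :=
  m = (2 * n)%nat /\
  (forall a : Cvec, (forall i, (i < m)%nat -> Cmv n B a i = C0) ->
      forall k, (k < n)%nat -> a k = C0) /\
  (forall a b : Cvec, omegaC m w (Cmv n B a) (Cmv n B b) = C0) /\
  (forall a : Cvec, (exists k, (k < n)%nat /\ a k <> C0) ->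
      Cim (hermE m w (Cmv n B a) (Cmv n B a)) = 0 /\
      Cre (hermE m w (Cmv n B a) (Cmv n B a)) > 0).

(* j is the complex structure on S with E = ker (j - i id) *)
Definition complex_structure_of (m n : nat) (j : Rmat) (B : Cmat) : Prop :=
  Rmat_eq m m (Rmul_m m j j) (Rscale_m (-1) Rid) /\
  Cmat_eq m n (Cmul_m m (complexify j) B) (fun i k => Cmul Ci (B i k)).

(* h in U(E), written in the basis B: h (B a) = B (M a); h preserves the
   Hermitian product of E *)
Definition unitary_on_E (m n : nat) (w : Rmat) (B M : Cmat) : Prop :=
  forall a b : Cvec,
    hermE m w (Cmv n B (Cmv n M a)) (Cmv n B (Cmv n M b)) =
    hermE m w (Cmv n B a) (Cmv n B b).

(* g = iota(h): the real map whose complexification acts as h on E and as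
   conj h on conj E *)
Definition is_iota (m n : nat) (B M : Cmat) (g : Rmat) : Prop :=
  Cmat_eq m n (Cmul_m m (complexify g) B) (Cmul_m n B M) /\
  Cmat_eq m n (Cmul_m m (complexify g) (Cconj_m B)) (Cmul_m n (Cconj_m B) (Cconj_m M)).

(* A in sym(S,j): symmetric for the scalar product omega(X, jY) *)
Definition is_sym (m : nat) (w j A : Rmat) : Prop :=
  forall x y : Rvec,
    omegaR m w (Rmv m A x) (Rmv m j y) = omegaR m w x (Rmv m j (Rmv m A y)).

(* f is "det^{1/2}(1/2 id + i A)": a square root of det(1/2 id + iA) on
   sym(S,j), continuous there, and positive at A = 0 *)
Definition sqrt_det_branch (m : nat) (w j : Rmat) (f : Rmat -> Cplx) : Prop :=
  (forall A0, is_sym m w j A0 -> forall eps, eps > 0 ->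
     exists delta, delta > 0 /\
       forall A, is_sym m w j A ->
         (forall i k, (i < m)%nat -> (k < m)%nat -> Rabs (A i k - A0 i k) < delta) ->
         Cnorm (Csub (f A) (f A0)) < eps) /\
  (forall A, is_sym m w j A ->
     Cmul (f A) (f A) =
     Cdet m (fun i k => Cadd (RC (/2 * Rid i k)) (Cmul Ci (RC (A i k))))) /\
  Cim (f Rzero) = 0 /\ Cre (f Rzero) > 0.

(* A(g) = 1/2 (id + g) (id - g)^{-1} j, where P is the inverse of id - g *)
Definition A_of (m : nat) (g P j : Rmat) : Rmat :=
  Rscale_m (/2) (Rmul_m m (Rmul_m m (Radd_m Rid g) P) j).

(* Main.v *)
Require Import Defs.
From Stdlib Require Import Reals Lra Lia List ClassicalEpsilon FunctionalExtensionality Classical.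
Open Scope R_scope.

Lemma Ccont_unfold (F : R -> R) (t0 : R) :
  (forall eps, eps > 0 -> exists d, d > 0 /\ forall t, Rabs (t - t0) < d -> Rabs (F t - F t0) < eps) ->
  continuity_pt F t0.
Proof.
intros H; unfold continuity_pt, continue_in, limit1_in, limit_in; simpl; unfold R_dist.
intros eps Heps; destruct (H eps Heps) as [d [Hd H']]; exists d; split; [exact Hd|].
intros x [_ Hx]; apply H'; exact Hx.
Qed.

Definition Ccont (F : R -> Cplx) : Prop :=
  forall t, continuity_pt (fun s => Cre (F s)) t /\ continuity_pt (fun s => Cim (F s)) t.

Lemma Ccont_const c : Ccont (fun _ => c).
Proof. intros t; split; apply continuity_pt_const; intros ??; reflexivity. Qed.

Lemma Ccont_RC : Ccont (fun s => RC s).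
Proof. intros t; split; simpl.
- apply derivable_continuous_pt, derivable_pt_id.
- apply continuity_pt_const; intros ??; reflexivity. Qed.

Lemma Ccont_add F G : Ccont F -> Ccont G -> Ccont (fun s => Cadd (F s) (G s)).
Proof. intros HF HG t; destruct (HF t), (HG t); simpl; split;
  apply continuity_pt_plus; assumption. Qed.

Lemma Ccont_mul F G : Ccont F -> Ccont G -> Ccont (fun s => Cmul (F s) (G s)).
Proof. intros HF HG t; destruct (HF t), (HG t); simpl; split.
- apply continuity_pt_minus; apply continuity_pt_mult; assumption.
- apply continuity_pt_plus; apply continuity_pt_mult; assumption. Qed.

Lemma Ccont_sum n (F : R -> nat -> Cplx) :
  (forall k, Ccont (fun s => F s k)) -> Ccont (fun s => Csum n (F s)).
Proof.
intros H; unfold Csum; generalize (seq 0 n) as L; induction L as [|a L IH]; simpl.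
- apply Ccont_const.
- apply Ccont_add; [apply H|exact IH].
Qed.

Lemma Ccont_det n (E : R -> Cmat) :
  (forall i k, Ccont (fun s => E s i k)) -> Ccont (fun s => Cdet n (E s)).
Proof.
revert E; induction n as [|n IH]; intros E H.
- exact (Ccont_const Defs.C1).
- change (Ccont (fun s => Csum (S n) (fun k => Cmul (Cmul (Csign k) (E s O k))
                    (Cdet n (fun i l => E s (S i) (if Nat.ltb l k then l else S l)))))).
  apply Ccont_sum; intros k; apply Ccont_mul.
  + apply Ccont_mul; [apply Ccont_const|apply H].
  + apply (IH (fun s i l => E s (S i) (if Nat.ltb l k then l else S l))).
    intros; apply H.
Qed.

Lemma bound1 (u : nat -> R) m : exists S, S > 0 /\ forall i, (i < m)%nat -> Rabs (u i) <= S.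
Proof.
induction m as [|m [Sb [HS H]]].
- exists 1; split; [lra|intros i Hi; lia].
- exists (Rmax Sb (Rabs (u m))); split.
  + apply Rlt_le_trans with Sb; [exact HS|apply Rmax_l].
  + intros i Hi; destruct (Nat.eq_dec i m) as [->|ne].
    * apply Rmax_r.
    * apply Rle_trans with Sb; [apply H; lia|apply Rmax_l].
Qed.

Lemma bound2 (h : nat -> nat -> R) m :
  exists S, S > 0 /\ forall i k, (i < m)%nat -> (k < m)%nat -> Rabs (h i k) <= S.
Proof.
induction m as [|m [Sb [HS H]]].
- exists 1; split; [lra|intros i k Hi; lia].
- destruct (bound1 (fun k => Rabs (h m k) + Rabs (h k m)) (S m)) as [S1 [HS1 H1]].
  exists (Rmax Sb S1); split.
  + apply Rlt_le_trans with Sb; [exact HS|apply Rmax_l].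
  + intros i k Hi Hk.
    destruct (Nat.eq_dec i m) as [->|ne].
    * apply Rle_trans with S1; [|apply Rmax_r].
      apply Rle_trans with (2 := H1 k Hk); rewrite (Rabs_right (_ + _));
        [|apply Rle_ge, Rplus_le_le_0_compat; apply Rabs_pos].
      generalize (Rabs_pos (h k m)); lra.
    * destruct (Nat.eq_dec k m) as [->|ne'].
      -- apply Rle_trans with S1; [|apply Rmax_r].
         apply Rle_trans with (2 := H1 i Hi); rewrite (Rabs_right (_ + _));
           [|apply Rle_ge, Rplus_le_le_0_compat; apply Rabs_pos].
         generalize (Rabs_pos (h m i)); lra.
      -- apply Rle_trans with Sb; [apply H; lia|apply Rmax_l].
Qed.

Lemma abs_le_norm_re z : Rabs (Cre z) <= Cnorm z.
Proof.
unfold Cnorm; rewrite <- sqrt_Rsqr_abs; apply sqrt_le_1_alt.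
unfold Rsqr; simpl; nra.
Qed.
Lemma abs_le_norm_im z : Rabs (Cim z) <= Cnorm z.
Proof.
unfold Cnorm; rewrite <- sqrt_Rsqr_abs; apply sqrt_le_1_alt.
unfold Rsqr; simpl; nra.
Qed.

Lemma cont_path (f : Rmat -> Cplx) (Pr : Rmat -> Prop) (A : Rmat) m :
  (forall A0, Pr A0 -> forall eps, eps > 0 ->
     exists delta, delta > 0 /\
       forall A, Pr A ->
         (forall i k, (i < m)%nat -> (k < m)%nat -> Rabs (A i k - A0 i k) < delta) ->
         Cnorm (Csub (f A) (f A0)) < eps) ->
  (forall t, Pr (fun i k => t * A i k)) ->
  Ccont (fun t => f (fun i k => t * A i k)).
Proof.
intros Hc HP t0.
destruct (bound2 A m) as [S [HS HB]].
assert (key : forall eps, eps > 0 -> exists d, d > 0 /\ forall t, Rabs (t - t0) < d ->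
   Cnorm (Csub (f (fun i k => t * A i k)) (f (fun i k => t0 * A i k))) < eps).
{ intros eps Heps. destruct (Hc _ (HP t0) eps Heps) as [d [Hd H]].
  exists (d / S); split; [apply Rdiv_lt_0_compat; assumption|].
  intros t Ht; apply H; [apply HP|].
  intros i k Hi Hk.
  replace (t * A i k - t0 * A i k) with ((t - t0) * A i k) by ring.
  rewrite Rabs_mult.
  apply Rle_lt_trans with (Rabs (t - t0) * S).
  - apply Rmult_le_compat_l; [apply Rabs_pos|apply HB; assumption].
  - apply Rlt_le_trans with (d / S * S); [apply Rmult_lt_compat_r; assumption|].
    right; field; lra. }
split; apply Ccont_unfold; intros eps Heps; destruct (key eps Heps) as [d [Hd H]];
  exists d; split; try exact Hd; intros t Ht; specialize (H t Ht).
- eapply Rle_lt_trans; [|exact H].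
  replace (Cre _ - Cre _) with (Cre (Csub (f (fun i k => t * A i k)) (f (fun i k => t0 * A i k))))
    by (simpl; ring).
  apply abs_le_norm_re.
- eapply Rle_lt_trans; [|exact H].
  replace (Cim _ - Cim _) with (Cim (Csub (f (fun i k => t * A i k)) (f (fun i k => t0 * A i k))))
    by (simpl; ring).
  apply abs_le_norm_im.
Qed.

Lemma branch (F Phi : R -> Cplx) :
  Ccont F -> Ccont Phi ->
  (forall t, F t = Phi t \/ F t = Copp (Phi t)) ->
  (forall t, Phi t <> C0) ->
  Cim (F 0) = 0 -> Cre (F 0) > 0 -> Cim (Phi 0) = 0 -> Cre (Phi 0) > 0 ->
  F 1 = Phi 1.
Proof.
intros HF HP Hpm Hnz HF0 HF0' HP0 HP0'.
set (v := fun t => Cre (F t) * Cre (Phi t) + Cim (F t) * Cim (Phi t)).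
assert (Hv : forall t, v t <> 0).
{ intros t; unfold v; assert (Hn : Cre (Phi t) * Cre (Phi t) + Cim (Phi t) * Cim (Phi t) > 0).
  { destruct (Req_dec (Cre (Phi t)) 0) as [e1|n1].
    - destruct (Req_dec (Cim (Phi t)) 0) as [e2|n2].
      + exfalso; apply (Hnz t); destruct (Phi t); simpl in *; subst; reflexivity.
      + rewrite e1; generalize (Rsqr_pos_lt _ n2); unfold Rsqr; lra.
    - generalize (Rsqr_pos_lt _ n1) (Rle_0_sqr (Cim (Phi t))); unfold Rsqr; lra. }
  destruct (Hpm t) as [e|e]; rewrite e; simpl; lra. }
assert (Hcv : continuity v).
{ intros t; destruct (HF t), (HP t); unfold v; apply continuity_pt_plus;
  apply continuity_pt_mult; assumption. }
destruct (Hpm 1) as [e|e]; [exact e|exfalso].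
assert (v0 : v 0 > 0).
{ unfold v; rewrite HF0, HP0; generalize (Rmult_lt_0_compat _ _ HF0' HP0'); lra. }
assert (v1 : v 1 < 0).
{ specialize (Hv 1). unfold v in *; rewrite e in *; simpl in *.
  generalize (Rle_0_sqr (Cre (Phi 1))) (Rle_0_sqr (Cim (Phi 1))); unfold Rsqr; intros;
  lra. }
destruct (IVT (fun t => - v t) 0 1) as [z [_ Hz]].
- apply continuity_opp; exact Hcv.
- lra.
- lra.
- lra.
- apply (Hv z); lra.
Qed.

From HB Require Import structures.
From mathcomp Require Import all_boot all_order all_algebra.
Set Implicit Arguments. Unset Strict Implicit. Unset Printing Implicit Defensive.

Lemma Cext (z w : Cplx) : Cre z = Cre w -> Cim z = Cim w -> z = w.
Proof. destruct z, w; simpl; intros -> ->; reflexivity. Qed.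

Definition Ceqb (z w : Cplx) : bool :=
  if Req_EM_T (Cre z) (Cre w) then (if Req_EM_T (Cim z) (Cim w) then true else false) else false.
Lemma Ceqb_axiom : Equality.axiom Ceqb.
Proof.
intros z w; unfold Ceqb.
destruct (Req_EM_T (Cre z) (Cre w)) as [e1|n1]; [destruct (Req_EM_T (Cim z) (Cim w)) as [e2|n2]|].
- constructor; apply Cext; assumption.
- constructor; intros ->; apply n2; reflexivity.
- constructor; intros ->; apply n1; reflexivity.
Qed.
HB.instance Definition _ := hasDecEq.Build Cplx Ceqb_axiom.

Definition Cfind (P : pred Cplx) (k : nat) : option Cplx :=
  match excluded_middle_informative (exists x, P x) with
  | left h => Some (proj1_sig (constructive_indefinite_description _ h))
  | right _ => None end.
Lemma Cfind_correct P k x : Cfind P k = Some x -> P x.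
Proof. unfold Cfind; destruct excluded_middle_informative as [h|h]; [|discriminate].
intros [= <-]; exact (proj2_sig (constructive_indefinite_description _ h)). Qed.
Lemma Cfind_complete (P : pred Cplx) : (exists x, P x) -> exists k, Cfind P k.
Proof. intros h; exists 0%nat; unfold Cfind; destruct excluded_middle_informative; [reflexivity|contradiction]. Qed.
Lemma Cfind_ext (P Q : pred Cplx) : P =1 Q -> Cfind P =1 Cfind Q.
Proof. intros h; assert (P = Q) by (apply functional_extensionality; exact h); subst; intros k; reflexivity. Qed.
HB.instance Definition _ := hasChoice.Build Cplx Cfind_correct Cfind_complete Cfind_ext.

Open Scope R_scope.
Lemma CaddA : associative Cadd. Proof. intros ???; apply Cext; simpl; ring. Qed.
Lemma CaddC : commutative Cadd. Proof. intros ??; apply Cext; simpl; ring. Qed.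
Lemma Cadd0 : left_id Defs.C0 Cadd. Proof. intros ?; apply Cext; simpl; ring. Qed.
Lemma CaddN : left_inverse Defs.C0 Copp Cadd. Proof. intros ?; apply Cext; simpl; ring. Qed.
HB.instance Definition _ := GRing.isZmodule.Build Cplx CaddA CaddC Cadd0 CaddN.
Lemma CmulA : associative Cmul. Proof. intros ???; apply Cext; simpl; ring. Qed.
Lemma CmulC : commutative Cmul. Proof. intros ??; apply Cext; simpl; ring. Qed.
Lemma Cmul1 : left_id Defs.C1 Cmul. Proof. intros ?; apply Cext; simpl; ring. Qed.
Lemma CmulDl : left_distributive Cmul Cadd. Proof. intros ???; apply Cext; simpl; ring. Qed.
Lemma C1neq0 : Defs.C1 != Defs.C0.
Proof. apply/eqP; intros h; apply R1_neq_R0; exact (f_equal Cre h). Qed.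
HB.instance Definition _ := GRing.Zmodule_isComNzRing.Build Cplx CmulA CmulC Cmul1 CmulDl C1neq0.
Lemma CmulV (x : Cplx) : x != 0%R -> Cmul (Cinv x) x = Defs.C1.
Proof. move/eqP=> h. assert (Hd : Cre x ^ 2 + Cim x ^ 2 <> 0).
{ intros h0. apply h. apply Cext; simpl; nra. }
apply Cext; simpl; field; simpl in Hd; rewrite Rmult_1_r in Hd; rewrite Rmult_1_r in Hd; exact Hd. Qed.
Lemma Cinv0 : Cinv 0%R = 0%R.
Proof. apply Cext; simpl; unfold Rdiv; ring. Qed.
HB.instance Definition _ := GRing.ComNzRing_isField.Build Cplx CmulV Cinv0.

Import GRing.Theory.
Local Open Scope ring_scope.

Lemma CaddE (x y : Cplx) : Cadd x y = x + y. Proof. by []. Qed.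
Lemma CmulE (x y : Cplx) : Cmul x y = x * y. Proof. by []. Qed.
Lemma CoppE (x : Cplx) : Copp x = - x. Proof. by []. Qed.
Lemma CsubE (x y : Cplx) : Csub x y = x - y. Proof. by []. Qed.
Lemma C0E : Defs.C0 = 0. Proof. by []. Qed.
Lemma C1E : Defs.C1 = 1. Proof. by []. Qed.

Lemma seq_iota a n : List.seq a n = iota a n.
Proof. by elim: n a => [|n IH] a //=; rewrite IH. Qed.

Lemma Csum_big n (f : nat -> Cplx) : Csum n f = \sum_(i < n) f i.
Proof.
rewrite /Csum seq_iota -(big_mkord xpredT f) /index_iota subn0.
elim: (iota 0 n) => [|x l IH] /=; first by rewrite big_nil.
by rewrite big_cons IH.
Qed.

Definition mxC (p q : nat) (F : Cmat) : 'M[Cplx]_(p, q) := \matrix_(i < p, k < q) F i k.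

Lemma mxC_mul p q r (A B : Cmat) : mxC p r (Cmul_m q A B) = mxC p q A *m mxC q r B.
Proof.
apply/matrixP=> i k; rewrite !mxE /Cmul_m Csum_big; apply: eq_bigr => l _.
by rewrite !mxE.
Qed.

Lemma mxC_eq p q A B : Cmat_eq p q A B -> mxC p q A = mxC p q B.
Proof. by move=> h; apply/matrixP=> i k; rewrite !mxE h //; apply/ltP. Qed.

Lemma mxC_id p : mxC p p Cid = 1%:M.
Proof. apply/matrixP=> i k; rewrite !mxE /Cid; have [<-|ne] := eqVneq i k.
  by rewrite PeanoNat.Nat.eqb_refl.
have -> : PeanoNat.Nat.eqb i k = false; last by [].
by apply/PeanoNat.Nat.eqb_neq => h; move/eqP: ne; apply; apply: val_inj.
Qed.

Lemma mxC_sub p q A B : mxC p q (Csub_m A B) = mxC p q A - mxC p q B.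
Proof. by apply/matrixP=> i k; rewrite !mxE. Qed.

Lemma Csign_E k : Csign k = (-1) ^+ k.
Proof.
rewrite /Csign; elim: k => [|k IH] //; rewrite exprS -IH.
rewrite PeanoNat.Nat.even_succ -PeanoNat.Nat.negb_even.
by case: (Nat.even k) => /=; rewrite ?mulN1r ?opprK // mulN1r.
Qed.

Lemma Cdet_det n (F : Cmat) : Cdet n F = \det (mxC n n F).
Proof.
elim: n F => [|n IH] F; first by rewrite det_mx00.
rewrite (expand_det_row _ ord0) /= Csum_big; apply: eq_bigr => k _.
rewrite IH /cofactor !mxE Csign_E add0n CmulE CmulE mulrA [_ * F 0%N k]mulrC; congr (_ * _ * \det _).
apply/matrixP=> i l; rewrite !mxE /= /bump /=; congr (F _ _).
case: (ltnP l k) => h.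
- have -> : PeanoNat.Nat.ltb l k = true by apply/PeanoNat.Nat.ltb_lt/ltP.
  by [].
- have -> : PeanoNat.Nat.ltb l k = false by apply/PeanoNat.Nat.ltb_ge/leP.
  by [].
Qed.

Lemma Cconj_zmod : zmod_morphism Cconj.
Proof. by move=> x y; apply: Cext => /=; rewrite /Rminus ?Ropp_plus_distr //; ring. Qed.
Lemma Cconj_mon : monoid_morphism Cconj.
Proof. split; first by apply: Cext => /=; rewrite ?Ropp_0.
by move=> x y; apply: Cext => /=; ring. Qed.
HB.instance Definition _ := GRing.isZmodMorphism.Build Cplx Cplx Cconj Cconj_zmod.
HB.instance Definition _ := GRing.isMonoidMorphism.Build Cplx Cplx Cconj Cconj_mon.

Lemma CconjK (x : Cplx) : Cconj (Cconj x) = x.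
Proof. by apply: Cext => /=; rewrite ?Ropp_involutive. Qed.

Lemma RC_add x y : RC (Rplus x y) = RC x + RC y.
Proof. by apply: Cext => /=; ring. Qed.
Lemma RC_mul x y : RC (Rmult x y) = RC x * RC y.
Proof. by apply: Cext => /=; ring. Qed.
Lemma RC_opp x : RC (Ropp x) = - RC x.
Proof. by apply: Cext => /=; ring. Qed.
Lemma RC_sub x y : RC (Rminus x y) = RC x - RC y.
Proof. by apply: Cext => /=; ring. Qed.
Lemma RC_conj x : Cconj (RC x) = RC x.
Proof. by apply: Cext => /=; ring. Qed.
Lemma RC_inj x y : RC x = RC y -> x = y.
Proof. by move=> h; exact: (f_equal Cre h). Qed.
Lemma RC0 : RC R0 = 0. Proof. by []. Qed.
Lemma RC1 : RC R1 = 1. Proof. by []. Qed.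
Lemma RC_sum n f : RC (Rsum n f) = Csum n (fun i => RC (f i)).
Proof.
rewrite /Rsum /Csum; elim: (List.seq 0 n) => [|a l IH] //=.
by rewrite RC_add IH.
Qed.

Definition colC p (a : Cvec) : 'cV[Cplx]_p := \col_(i < p) a i.
Definition mxRe p q (A : Rmat) : 'M[Cplx]_(p, q) := mxC p q (complexify A).

Lemma Cmv_col p q A x : colC p (Cmv q A x) = mxC p q A *m colC q x.
Proof. apply/matrixP=> i k; rewrite !mxE /Cmv Csum_big; apply: eq_bigr => l _.
by rewrite !mxE. Qed.

Lemma colC_conj p (y : Cvec) : colC p (fun i => Cconj (y i)) = map_mx Cconj (colC p y).
Proof. by apply/matrixP=> i k; rewrite !mxE. Qed.

Lemma mxC_conj p q A : mxC p q (Cconj_m A) = map_mx Cconj (mxC p q A).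
Proof. by apply/matrixP=> i k; rewrite !mxE. Qed.

Lemma omegaC_mx m w x y :
  omegaC m w x y = ((colC m x)^T *m mxRe m m w *m colC m y) 0 0.
Proof.
rewrite /omegaC Csum_big !mxE.
under eq_bigr => i _ do rewrite Csum_big.
rewrite exchange_big /=; apply: eq_bigr => k _.
rewrite !mxE big_distrl /=; apply: eq_bigr => i _.
by rewrite !mxE.
Qed.

Lemma mxR_mul p q r A B : mxRe p r (Rmul_m q A B) = mxRe p q A *m mxRe q r B.
Proof.
rewrite /mxRe -mxC_mul; apply/matrixP=> i k; rewrite !mxE /complexify /Rmul_m RC_sum /Cmul_m.
by rewrite /Csum; congr (fold_right _ _ _); apply: List.map_ext => l; rewrite RC_mul.
Qed.
Lemma mxR_add p q A B : mxRe p q (Radd_m A B) = mxRe p q A + mxRe p q B.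
Proof. by apply/matrixP=> i k; rewrite !mxE /complexify /Radd_m RC_add. Qed.
Lemma mxR_sub p q A B : mxRe p q (Rsub_m A B) = mxRe p q A - mxRe p q B.
Proof. by apply/matrixP=> i k; rewrite !mxE /complexify /Rsub_m RC_sub. Qed.
Lemma mxR_scale p q c A : mxRe p q (Rscale_m c A) = RC c *: mxRe p q A.
Proof. by apply/matrixP=> i k; rewrite !mxE /complexify /Rscale_m RC_mul. Qed.
Lemma mxR_id p : mxRe p p Rid = 1%:M.
Proof. rewrite -(mxC_id p); apply/matrixP=> i k; rewrite !mxE /complexify /Rid /Cid.
by case: (PeanoNat.Nat.eqb i k). Qed.
Lemma mxR_conj p q A : map_mx Cconj (mxRe p q A) = mxRe p q A.
Proof. by apply/matrixP=> i k; rewrite !mxE RC_conj. Qed.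
Lemma mxR_eq p q A B : Rmat_eq p q A B -> mxRe p q A = mxRe p q B.
Proof. by move=> h; apply/matrixP=> i k; rewrite !mxE /complexify h //; apply/ltP. Qed.

Definition colR p (x : Rvec) : 'cV[Cplx]_p := colC p (fun i => RC (x i)).

Lemma Rmv_col p q A x : colR p (Rmv q A x) = mxRe p q A *m colR q x.
Proof. rewrite /colR -Cmv_col; apply/matrixP=> i k; rewrite !mxE /Rmv RC_sum /Cmv.
by rewrite /Csum; congr (fold_right _ _ _); apply: List.map_ext => l; rewrite RC_mul. Qed.

Lemma omegaR_mx m w x y :
  RC (omegaR m w x y) = ((colR m x)^T *m mxRe m m w *m colR m y) 0 0.
Proof.
rewrite -omegaC_mx /omegaR /omegaC RC_sum /Csum; congr (fold_right _ _ _).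
apply: List.map_ext => i; rewrite RC_sum; congr (fold_right _ _ _).
by apply: List.map_ext => k; rewrite !RC_mul.
Qed.

Lemma sym_of_mx m w j A :
  (mxRe m m A)^T *m mxRe m m w *m mxRe m m j = mxRe m m w *m mxRe m m j *m mxRe m m A ->
  Defs.is_sym m w j A.
Proof.
move=> h x y; apply: RC_inj; rewrite !omegaR_mx !Rmv_col.
set X := colR m x; set Y := colR m y; congr (_ 0 0).
rewrite trmx_mul -!mulmxA; congr (_ *m _).
rewrite !mulmxA h -!mulmxA //.
Qed.

Lemma zm (V : zmodType) (a b c : V) : c + a - (a + b) + (b - a + (a - c)) = 0.
Proof. by rewrite addrKA subrKA subrKA subrr. Qed.

Section Alg.
Variable n : nat.
Local Notation m := (n + n)%N.
Local Notation cj := (map_mx Cconj).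
Variables (Bm : 'M[Cplx]_(m, n)) (W J G Pm : 'M[Cplx]_m) (Mm Nm Mi : 'M[Cplx]_n).
Let Bc := cj Bm.
Let Mc := cj Mm.
Let Nc := cj Nm.
Let K := Bm^T *m W *m Bc.
Let Q : 'M[Cplx]_m := row_mx Bm Bc.

Hypothesis hLag : Bm^T *m W *m Bm = 0.
Hypothesis hWr : cj W = W.
Hypothesis hWa : W^T = - W.
Hypothesis hJr : cj J = J.
Hypothesis hpos : forall c : 'cV_n, c != 0 -> (c^T *m K *m cj c) 0 0 != 0.
Hypothesis hind : forall c : 'cV_n, Bm *m c = 0 -> c = 0.
Hypothesis hU : Mm^T *m K *m Mc = K.
Hypothesis hJ : J *m Bm = Ci *: Bm.
Hypothesis hG : G *m Bm = Bm *m Mm.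
Hypothesis hG2 : G *m Bc = Bc *m Mc.
Hypothesis hN1 : (Mm - 1) *m Nm = 1.
Hypothesis hN2 : Nm *m (Mm - 1) = 1.
Hypothesis hMi : Mm *m Mi = 1.
Hypothesis hP1 : Pm *m (1 - G) = 1.

Lemma cjK p q (X : 'M[Cplx]_(p, q)) : cj (cj X) = X.
Proof. by apply/matrixP=> i k; rewrite !mxE CconjK. Qed.

Lemma cj_tr p q (X : 'M[Cplx]_(p, q)) : cj X^T = (cj X)^T.
Proof. by apply/matrixP=> i k; rewrite !mxE. Qed.

Lemma Ci_conj : Cconj Ci = - Ci.
Proof. by apply: Cext => /=; rewrite ?Ropp_0. Qed.

Lemma Q_unit : Q \in unitmx.
Proof.
rewrite unitmxE unitfE -det_tr; apply/negP => /det0P [v vn0 vQ].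
have hQ : Q *m v^T = 0 by rewrite -(trmxK (Q *m v^T)) trmx_mul trmxK vQ trmx0.
move: hQ; rewrite -(vsubmxK v^T) mul_row_col.
set a := usubmx v^T; set b := dsubmx v^T => hab.
have ha : a = 0.
  apply/eqP; apply: contraT => an0; move: (hpos an0); rewrite /K.
  have e1 : Bm *m a = - (Bc *m b) by apply/eqP; rewrite -addr_eq0 hab.
  have e2 : Bc *m cj a = - (Bm *m cj b).
    by rewrite /Bc -map_mxM e1 map_mxN map_mxM cjK.
  have -> : a^T *m (Bm^T *m W *m Bc) *m cj a = - (a^T *m (Bm^T *m W *m Bm) *m cj b).
    rewrite !mulmxA -(mulmxA (a^T *m Bm^T *m W)) e2.
    by rewrite mulmxN -!mulmxA.
  by rewrite hLag mulmx0 mul0mx oppr0 mxE eqxx.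
have hb : b = 0.
  move: hab; rewrite ha mulmx0 add0r => hb.
  have : Bm *m cj b = 0 by rewrite -(cjK Bm) -map_mxM -/Bc hb map_mx0.
  move/hind => hb'; by rewrite -(cjK b) hb' map_mx0.
have hv : v^T = 0.
  rewrite -(vsubmxK v^T) -/a -/b ha hb.
  by apply/matrixP=> i k; rewrite !mxE; case: splitP => *; rewrite mxE.
by move: vn0; rewrite -(trmxK v) hv trmx0 eqxx.
Qed.

Definition dQ (X : 'M[Cplx]_m) (X1 X2 : 'M[Cplx]_n) := X *m Q = Q *m block_mx X1 0 0 X2.

Lemma dQ_mul X X1 X2 Y Y1 Y2 : dQ X X1 X2 -> dQ Y Y1 Y2 -> dQ (X *m Y) (X1 *m Y1) (X2 *m Y2).
Proof.
move=> hX hY; rewrite /dQ -mulmxA hY mulmxA hX -mulmxA mulmx_block.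
by rewrite !mulmx0 !mul0mx !addr0 !add0r.
Qed.

Lemma dQ_add X X1 X2 Y Y1 Y2 : dQ X X1 X2 -> dQ Y Y1 Y2 -> dQ (X + Y) (X1 + Y1) (X2 + Y2).
Proof. by move=> hX hY; rewrite /dQ mulmxDl hX hY -mulmxDr add_block_mx addr0. Qed.

Lemma dQ_scale a X X1 X2 : dQ X X1 X2 -> dQ (a *: X) (a *: X1) (a *: X2).
Proof. by move=> hX; rewrite /dQ -scalemxAl hX scalemxAr scale_block_mx !scaler0. Qed.

Lemma dQ_scalar a : dQ a%:M a%:M a%:M.
Proof. by rewrite /dQ -scalar_mx_block mul_mx_scalar mul_scalar_mx. Qed.

Lemma dQ_opp X X1 X2 : dQ X X1 X2 -> dQ (- X) (- X1) (- X2).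
Proof. by move=> h; rewrite -!scaleN1r; apply: dQ_scale. Qed.

Lemma dQ_G : dQ G Mm Mc.
Proof.
rewrite /dQ /Q mul_mx_row mul_row_block hG hG2.
by rewrite !mulmx0 addr0 add0r.
Qed.

Lemma dQ_J : dQ J (Ci%:M) ((- Ci)%:M).
Proof.
rewrite /dQ /Q mul_mx_row mul_row_block !mulmx0 addr0 add0r !mul_mx_scalar hJ.
congr row_mx.
by rewrite /Bc -hJr -map_mxM hJ map_mxZ; congr (_ *: _); exact: Ci_conj.
Qed.

Lemma dQ_P : dQ Pm (- Nm) (- Nc).
Proof.
have h1 : dQ (1%:M - G) (1%:M - Mm) (1%:M - Mc) by apply: dQ_add; [apply: dQ_scalar | apply: dQ_opp; apply: dQ_G].
have e : Q = (1%:M - G) *m Q *m block_mx (- Nm) 0 0 (- Nc).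
  rewrite h1 -mulmxA mulmx_block !mulmx0 !mul0mx !addr0 !add0r.
  have e1 : (1%:M - Mm) *m - Nm = 1%:M by rewrite mulmxN -mulNmx opprB hN1.
  have e2 : (1%:M - Mc) *m - Nc = 1%:M.
    by move: (congr1 cj e1); rewrite map_mxM map_mxN map_mxB map_mx1.
  by rewrite e1 e2 -scalar_mx_block mulmx1.
rewrite /dQ {1}e !mulmxA hP1 mul1mx //.
Qed.

Let h := RC (/2).
Let T' := (1%:M + Mm) *m Nm.
Definition Am := h *: ((1%:M + G) *m Pm *m J).
Definition X1 (t : R) := h *: (1%:M + RC t *: T').
Definition X2 (t : R) := h *: (1%:M - RC t *: cj T').

Lemma dQ_A : dQ Am (h *: ((1%:M + Mm) *m - Nm *m Ci%:M)) (h *: ((1%:M + Mc) *m - Nc *m (- Ci)%:M)).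
Proof.
apply: dQ_scale; apply: dQ_mul; last exact: dQ_J.
apply: dQ_mul; last exact: dQ_P.
by apply: dQ_add; [apply: dQ_scalar| apply: dQ_G].
Qed.

Lemma CiCi : Ci * Ci = -1.
Proof. by apply: Cext => /=; ring. Qed.

Lemma dQ_X t : dQ (h%:M + (Ci * RC t) *: Am) (X1 t) (X2 t).
Proof.
have := dQ_add (dQ_scalar h) (dQ_scale (Ci * RC t) dQ_A).
have -> : h%:M + (Ci * RC t) *: (h *: ((1%:M + Mm) *m - Nm *m Ci%:M)) = X1 t.
  rewrite mulmxN mulNmx mul_mx_scalar /X1 -/T'.
  apply/matrixP=> i k; rewrite !mxE; case: (i == k) => /=;
  rewrite ?mulr1n ?mulr0n; apply: Cext => /=; ring.
have -> : h%:M + (Ci * RC t) *: (h *: ((1%:M + Mc) *m - Nc *m (- Ci)%:M)) = X2 t.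
  have eT : cj T' = (1%:M + Mc) *m Nc by rewrite /T' map_mxM map_mxD map_mx1.
  rewrite mulmxN mulNmx mul_mx_scalar /X2 eT.
  apply/matrixP=> i k; rewrite !mxE; case: (i == k) => /=;
  rewrite ?mulr1n ?mulr0n; apply: Cext => /=; ring_simplify; reflexivity.
by [].
Qed.

Lemma det_X t : \det (h%:M + (Ci * RC t) *: Am) = \det (X1 t) * \det (X2 t).
Proof.
have := congr1 determinant (dQ_X t); rewrite !det_mulmx det_ublock.
have hQ : \det Q != 0 by have := Q_unit; rewrite unitmxE unitfE.
by rewrite [\det Q * _]mulrC => /(mulIf hQ).
Qed.

Lemma KT_gen (K0 M0 N0 : 'M[Cplx]_n) : M0^T *m K0 *m cj M0 = K0 ->
  (M0 - 1%:M) *m N0 = 1%:M -> N0 *m (M0 - 1%:M) = 1%:M ->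
  ((1%:M + M0) *m N0)^T *m K0 = - (K0 *m cj ((1%:M + M0) *m N0)).
Proof.
move=> hU0 hN10 hN20.
set T0 := (1%:M + M0) *m N0.
set U := M0 - 1%:M.
have hTU : T0 *m U = 1%:M + M0 by rewrite /T0 -mulmxA hN20 mulmx1.
have hTUc : cj T0 *m cj U = 1%:M + cj M0 by rewrite -map_mxM hTU map_mxD map_mx1.
have key : U^T *m (T0^T *m K0 + K0 *m cj T0) *m cj U = 0.
  rewrite mulmxDr mulmxDl mulmxA -trmx_mul hTU -!mulmxA hTUc.
  rewrite /U map_mxB map_mx1 !raddfD /= !raddfN /= trmx1.
  rewrite !mulmx1 !mulmxDl ?mulmxBl ?mulNmx !mul1mx mulmxA hU0.
  exact: zm.
have hNU : N0^T *m U^T = 1%:M by rewrite -trmx_mul hN10 trmx1.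
have hUN : cj U *m cj N0 = 1%:M by rewrite -map_mxM hN10 map_mx1.
apply/eqP; rewrite -subr_eq0 opprK; apply/eqP.
have e : N0^T *m (U^T *m (T0^T *m K0 + K0 *m cj T0) *m cj U) *m cj N0
         = T0^T *m K0 + K0 *m cj T0.
  by rewrite !mulmxA hNU mul1mx -mulmxA hUN mulmx1.
by rewrite -e key mulmx0 mul0mx.
Qed.

Lemma KT : T'^T *m K = - (K *m cj T').
Proof. exact: KT_gen hU hN1 hN2. Qed.


Lemma K_det : \det K != 0.
Proof.
rewrite -det_tr; apply/negP => /det0P [v vn0 vK].
have hK : K *m v^T = 0 by rewrite -(trmxK (K *m v^T)) trmx_mul trmxK vK trmx0.
have cn0 : cj v^T != 0 by rewrite map_mx_eq0 trmx_eq0.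
by move: (hpos cn0); rewrite cjK -mulmxA hK mulmx0 mxE eqxx.
Qed.

Lemma det_X2 t : \det (X2 t) = \det (X1 t).
Proof.
have e : K *m X2 t = (X1 t)^T *m K.
  rewrite /X1 /X2 -scalemxAr [(h *: _)^T]linearZ /= -scalemxAl; congr (_ *: _).
  rewrite [(1%:M + _)^T]raddfD /= trmx1 [(RC t *: T')^T]linearZ /=.
  by rewrite mulmxBr mulmx1 mulmxDl mul1mx -scalemxAl KT -scalemxAr scalerN.
have := congr1 determinant e; rewrite !det_mulmx det_tr mulrC.
by move/(mulIf K_det).
Qed.

Lemma Cself (x : Cplx) : x = - x -> x = 0.
Proof.
move=> e; have e1 := f_equal Cre e; have e2 := f_equal Cim e; simpl in e1, e2.
by apply: Cext => /=; lra.
Qed.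

Lemma h_neq0 : h != 0.
Proof. apply/eqP => e; have := f_equal Cre e; simpl; lra. Qed.

Lemma det_X1 t : \det (X1 t) != 0.
Proof.
rewrite -det_tr; apply/negP => /det0P [v vn0 vX].
set c := v^T.
have hX : X1 t *m c = 0 by rewrite -(trmxK (X1 t *m c)) trmx_mul trmxK vX trmx0.
have cn0 : c != 0 by rewrite trmx_eq0.
have hX' : RC t *: (T' *m c) = - c.
  move: hX; rewrite /X1 -scalemxAl => /eqP; rewrite scaler_eq0 (negbTE h_neq0) /=.
  by rewrite mulmxDl mul1mx -scalemxAl addrC addr_eq0 => /eqP.
have hXc : RC t *: (cj T' *m cj c) = - cj c.
  by rewrite -map_mxM -[RC t]RC_conj -map_mxZ hX' map_mxN.
have e1 : (RC t *: (T' *m c))^T *m K *m cj c = - (c^T *m K *m cj c).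
  by rewrite hX' raddfN /= !mulNmx.
have e2 : (RC t *: (T' *m c))^T *m K *m cj c = c^T *m K *m cj c.
  rewrite linearZ /= trmx_mul -!scalemxAl -(mulmxA c^T) KT mulmxN mulNmx.
  have -> : c^T *m (K *m cj T') *m cj c = c^T *m K *m (cj T' *m cj c) by rewrite !mulmxA.
  by rewrite scalerN scalemxAr hXc mulmxN opprK.
move: (hpos cn0); rewrite (Cself (x := (c^T *m K *m cj c) 0 0)) ?eqxx //.
by rewrite -{1}e2 e1 mxE.
Qed.

Lemma X1_one : \det (X1 R1) * \det (1%:M - Mi) = 1.
Proof.
have e : X1 R1 = Mm *m Nm.
  have e1 : 1%:M + T' = (Mm + Mm) *m Nm.
    have e0 : (Mm - 1%:M) *m Nm + (1%:M + Mm) *m Nm = (Mm + Mm) *m Nm.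
      by rewrite -mulmxDl addrA subrK.
    by rewrite -e0 hN1.
  rewrite /X1 RC1 scale1r e1.
  rewrite scalemxAl; congr (_ *m _).
  by apply/matrixP=> i k; rewrite !mxE; apply: Cext => /=; field.
have e2 : 1%:M - Mi = (Mm - 1%:M) *m Mi by rewrite mulmxBl hMi mul1mx.
rewrite -det_mulmx e e2.
have -> : Mm *m Nm *m ((Mm - 1%:M) *m Mi) = Mm *m (Nm *m (Mm - 1%:M)) *m Mi by rewrite !mulmxA.
by rewrite hN2 mulmx1 hMi det1.
Qed.

Lemma Qcanc (X Y : 'M[Cplx]_m) : Q^T *m X *m Q = Q^T *m Y *m Q -> X = Y.
Proof.
have hQ := Q_unit; have hQt : Q^T \in unitmx by rewrite unitmx_tr.
move=> e; have := congr1 (fun Z => invmx Q^T *m Z *m invmx Q) e => /=.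
by rewrite -!mulmxA !mulKmx // !mulmxA !mulmxK.
Qed.

Lemma sym_A : Am^T *m W *m J = W *m J *m Am.
Proof.
set al := h *: ((1%:M + Mm) *m - Nm *m Ci%:M).
set be := h *: ((1%:M + Mc) *m - Nc *m (- Ci)%:M).
have hA : Am *m Q = Q *m block_mx al 0 0 be := dQ_A.
have hJQ : J *m Q = Q *m block_mx Ci%:M 0 0 (- Ci)%:M := dQ_J.
have hW' : Q^T *m W *m Q = block_mx 0 K (- K^T) 0.
  rewrite /Q tr_row_mx mul_col_mx mul_col_row; congr block_mx.
  - exact: hLag.
  - by rewrite /K !trmx_mul trmxK hWa mulNmx mulmxN opprK !mulmxA.
  - by rewrite /Bc -cj_tr -hWr -!map_mxM hLag map_mx0.
have key : al^T *m K = K *m be.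
  rewrite /al /be !mulmxN !mulNmx !mul_mx_scalar !scalerN linearN /= linearZ /= linearZ /=.
  have eT : (1%:M + Mc) *m Nc = cj T' by rewrite /T' map_mxM map_mxD map_mx1.
  rewrite eT -/T' linearZ /= scalerN scalerA mulNmx -scalemxAl KT scalerN opprK.
  by rewrite mulmxN scalerA -scalemxAr mulrN scaleNr opprK.
apply: Qcanc.
have -> : Q^T *m (Am^T *m W *m J) *m Q = (Am *m Q)^T *m W *m (J *m Q) by rewrite trmx_mul !mulmxA.
have -> : Q^T *m (W *m J *m Am) *m Q = Q^T *m W *m (J *m (Am *m Q)) by rewrite !mulmxA.
rewrite hA (mulmxA J Q) hJQ trmx_mul.
set DA := block_mx al 0 0 be; set DJ := block_mx Ci%:M 0 0 (- Ci)%:M.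
have -> : DA^T *m Q^T *m W *m (Q *m DJ) = DA^T *m (Q^T *m W *m Q) *m DJ by rewrite !mulmxA.
have -> : Q^T *m W *m (Q *m DJ *m DA) = (Q^T *m W *m Q) *m DJ *m DA by rewrite !mulmxA.
rewrite hW' /DA /DJ tr_block_mx !trmx0 !mulmx_block !mulmx0 !mul0mx !addr0 !add0r.
have key2 : be^T *m K^T = K^T *m al by rewrite -trmx_mul -key trmx_mul trmxK.
congr block_mx; rewrite ?mul0mx //.
  by rewrite key !mul_mx_scalar -scalemxAl.
by rewrite mulmxN key2 !mul_mx_scalar -scalemxAl mulNmx scalerN.
Qed.


Lemma all_facts :
  (Am^T *m W *m J = W *m J *m Am) /\
  (forall t, \det ((RC (/2))%:M + (Ci * RC t) *: Am) = \det (X1 t) ^+ 2) /\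
  (forall t, \det (X1 t) != 0) /\
  (\det (X1 R1) * \det (1%:M - Mi) = 1).
Proof.
split; first exact: sym_A.
split; first by move=> t; rewrite det_X det_X2 expr2.
split; first exact: det_X1.
exact: X1_one.
Qed.
End Alg.

Definition ind (i : nat) : Cvec := fun l => if (l == i)%N then 1 else 0.

Lemma colC_ind n (i : 'I_n) : colC n (ind i) = delta_mx i 0.
Proof. apply/matrixP=> l k; rewrite !mxE /ind (ord1 k) eqxx andbT.
by have -> : ((l : nat) == i) = (l == i) by []; case: (l == i). Qed.

Lemma testeq n (X Y : 'M[Cplx]_n) :
  (forall a b, ((colC n a)^T *m X *m colC n b) 0 0 = ((colC n a)^T *m Y *m colC n b) 0 0) -> X = Y.
Proof.
move=> H; apply/matrixP=> i k; have := H (ind i) (ind k).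
by rewrite !colC_ind trmx_delta -!rowE -!colE !mxE.
Qed.

Definition vecof n (c : 'cV[Cplx]_n) : Cvec :=
  fun i => match @insub nat (fun k => (k < n)%N) _ i with Some j => c j 0 | None => 0 end.
Lemma colC_vecof n c : colC n (vecof c) = c.
Proof.
apply/matrixP=> i k; rewrite !mxE /vecof (ord1 k).
case: insubP => [j _ /val_inj -> //|]; by rewrite ltn_ord.
Qed.

Lemma colC_entry p (f : Cvec) (i : 'I_p) : colC p f i 0 = f i.
Proof. by rewrite mxE. Qed.

Lemma colC_conjK p (b : Cvec) : map_mx Cconj (colC p (fun i => Cconj (b i))) = colC p b.
Proof. by apply/matrixP=> i k; rewrite !mxE CconjK. Qed.

Lemma nz_entry n (c : 'cV[Cplx]_n) : c != 0 -> exists i : 'I_n, c i 0 != 0.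
Proof.
move=> cn0; apply/not_all_not_ex => H; move/negP: cn0; apply; apply/eqP.
apply/matrixP=> i k; rewrite (ord1 k) mxE; by move/negP: (H i); rewrite negbK => /eqP.
Qed.

Lemma Cmv_entry p q A x (i : 'I_p) : Cmv q A x i = (mxC p q A *m colC q x) i 0.
Proof. by rewrite -Cmv_col mxE. Qed.

Lemma RC_pow (x : R) k : RC (pow x k) = RC x ^+ k.
Proof. elim: k => [|k IH] //=; by rewrite RC_mul IH exprS. Qed.

Lemma hermE_mx m n w (B : Cmat) a b :
  hermE m w (Cmv n B a) (Cmv n B b) =
  - Ci * ((colC n a)^T *m ((mxC m n B)^T *m mxRe m m w *m map_mx Cconj (mxC m n B))
          *m map_mx Cconj (colC n b)) 0 0.
Proof.
rewrite /hermE omegaC_mx colC_conj !Cmv_col map_mxM trmx_mul.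
by congr (_ * _); rewrite !mulmxA.
Qed.

Section Main.
Variables (n : nat) (w j : Rmat) (B M Minv : Cmat) (g P : Rmat) (f : Rmat -> Cplx).
Local Notation m := (n + n)%N.
Hypothesis Hsf : symplectic_form m w.
Hypothesis Hpp : positive_polarization m n w B.
Hypothesis Hcs : complex_structure_of m n j B.
Hypothesis Hu : unitary_on_E m n w B M.
Hypothesis Hinv : Cinvertible n (Csub_m M Cid).
Hypothesis HMi1 : Cmat_eq n n (Cmul_m n M Minv) Cid.
Hypothesis Hio : is_iota m n B M g.
Hypothesis HP1 : Rmat_eq m m (Rmul_m m P (Rsub_m Rid g)) Rid.
Hypothesis Hbr : sqrt_det_branch m w j f.

Let Bm := mxC m n B.
Let W := mxRe m m w.
Let J := mxRe m m j.
Let G := mxRe m m g.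
Let Pm := mxRe m m P.
Let Mm := mxC n n M.
Let Mi := mxC n n Minv.
Local Notation cj := (map_mx Cconj).

Lemma hLag : Bm^T *m W *m Bm = 0.
Proof.
case: Hpp => _ [_ [HL _]]; apply: testeq => a b.
rewrite mulmx0 mul0mx [RHS]mxE.
have := HL a b; rewrite omegaC_mx !Cmv_col trmx_mul C0E => <-.
by rewrite !mulmxA.
Qed.

Lemma hWr : cj W = W. Proof. exact: mxR_conj. Qed.
Lemma hJr : cj J = J. Proof. exact: mxR_conj. Qed.
Lemma hWa : W^T = - W.
Proof.
case: Hsf => Ha _; apply/matrixP=> i k; rewrite !mxE /complexify Ha ?RC_opp //; by apply/ltP.
Qed.

Let K := Bm^T *m W *m cj Bm.

Lemma hpos : forall c : 'cV_n, c != 0 -> (c^T *m K *m cj c) 0 0 != 0.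
Proof.
move=> c cn0; case: Hpp => _ [_ [_ Hpos]].
have [i ci] := nz_entry cn0.
have [_ Hre] : Cim (hermE m w (Cmv n B (vecof c)) (Cmv n B (vecof c))) = R0 /\
  Rgt (Cre (hermE m w (Cmv n B (vecof c)) (Cmv n B (vecof c)))) R0.
  apply: Hpos; exists i; split; first by apply/ltP.
  by move=> e; move: ci; rewrite -(colC_vecof c) mxE e eqxx.
apply/eqP => e; move: Hre; rewrite hermE_mx colC_vecof -/K e mulr0 /=; lra.
Qed.

Lemma hind : forall c : 'cV_n, Bm *m c = 0 -> c = 0.
Proof.
move=> c hc; case: Hpp => _ [Hi _].
have H0 : forall i, (i < m)%coq_nat -> Cmv n B (vecof c) i = Defs.C0.
  move=> i /ltP hi; have := @Cmv_entry m n B (vecof c) (Ordinal hi).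
  by rewrite colC_vecof hc mxE.
apply/matrixP=> i k; rewrite (ord1 k) mxE.
have := Hi _ H0 i (@ltP _ _ (ltn_ord i)).
by rewrite /vecof; case: insubP => [j0 _ /val_inj -> //|]; rewrite ltn_ord.
Qed.

Lemma Ci_n0 : - Ci != 0.
Proof. by rewrite oppr_eq0; apply/eqP => e; have := f_equal Cim e; simpl; lra. Qed.

Lemma hU : Mm^T *m K *m cj Mm = K.
Proof.
apply: testeq => a b.
have := Hu a (fun i => Cconj (b i)); rewrite !hermE_mx !Cmv_col => /(mulfI Ci_n0).
rewrite map_mxM colC_conj cjK trmx_mul -/K => H.
by rewrite !mulmxA; rewrite !mulmxA in H.
Qed.

Lemma hJ : J *m Bm = Ci *: Bm.
Proof.
case: Hcs => _ H; have := mxC_eq H; rewrite mxC_mul => ->.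
by apply/matrixP=> i k; rewrite !mxE.
Qed.

Lemma hG : G *m Bm = Bm *m Mm.
Proof. by case: Hio => H _; have := mxC_eq H; rewrite !mxC_mul. Qed.

Lemma hG2 : G *m cj Bm = cj Bm *m cj Mm.
Proof. by case: Hio => _ H; have := mxC_eq H; rewrite !mxC_mul !mxC_conj. Qed.

Lemma hMi : Mm *m Mi = 1%:M.
Proof. by have := mxC_eq HMi1; rewrite mxC_mul mxC_id. Qed.

Lemma hP1 : Pm *m (1%:M - G) = 1%:M.
Proof. by have := mxR_eq HP1; rewrite mxR_mul mxR_sub !mxR_id. Qed.

Lemma hN : exists Nm : 'M[Cplx]_n, (Mm - 1%:M) *m Nm = 1%:M /\ Nm *m (Mm - 1%:M) = 1%:M.
Proof.
case: Hinv => N [H1 H2]; exists (mxC n n N).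
by move: (mxC_eq H1) (mxC_eq H2); rewrite !mxC_mul !mxC_sub !mxC_id.
Qed.

Lemma main_nn : f (A_of m g P j) = Cinv (Cdet n (Csub_m Cid Minv)).
Proof.
case: Hinv => N [HN1 HN2].
set Nm := mxC n n N.
have hN1 : (Mm - 1%:M) *m Nm = 1%:M by move: (mxC_eq HN1); rewrite !mxC_mul !mxC_sub !mxC_id.
have hN2 : Nm *m (Mm - 1%:M) = 1%:M by move: (mxC_eq HN2); rewrite !mxC_mul !mxC_sub !mxC_id.
have [hsym [hdet [hnz hone]]] :=
  all_facts hLag hWr hWa hJr hpos hind hU hJ hG hG2 hN1 hN2 hMi hP1.
set A := A_of m g P j.
have hAm : mxRe m m A = Am J G Pm by rewrite /A /A_of mxR_scale !mxR_mul mxR_add mxR_id.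
pose At := fun (t : R) (i k : nat) => Rmult t (A i k).
have hAt t : mxRe m m (At t) = RC t *: Am J G Pm.
  by rewrite -hAm; apply/matrixP=> i k; rewrite !mxE /complexify /At RC_mul.
have hsymt t : Defs.is_sym m w j (At t).
  apply: sym_of_mx; rewrite hAt linearZ /= -!scalemxAl -/W -/J hsym.
  by rewrite scalemxAr.
pose X1f := fun (t : R) (i k : nat) => Cmul (RC (/2)) (Cadd (Cid i k)
    (Cmul (RC t) (Cmul_m n (fun i k => Cadd (Cid i k) (M i k)) N i k))).
pose Phi := fun t => Cdet n (X1f t).
have e1 : mxC n n (Cmul_m n (fun i k => Cadd (Cid i k) (M i k)) N) = (1%:M + Mm) *m Nm.
  rewrite mxC_mul; congr (_ *m _).
  by apply/matrixP=> i k; rewrite -(mxC_id n) !mxE.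
have hX1 t : mxC n n (X1f t) = X1 Mm Nm t.
  rewrite /X1 /= -e1; apply/matrixP=> i k; rewrite !mxE /X1f.
  have := congr1 (fun X : 'M[Cplx]_n => X i k) (mxC_id n); rewrite !mxE /= => ->.
  by [].
case: Hbr => Hc [Hsq [H0i H0r]].
pose F := fun t => f (At t).
have hsq t : F t * F t = Phi t * Phi t.
  rewrite /F -CmulE (Hsq _ (hsymt t)) Cdet_det /Phi Cdet_det hX1 -expr2 -hdet.
  congr (\det _); apply/matrixP=> i k; rewrite -hAm -scalemx1 !mxE /At.
  rewrite RC_mul RC_mul /complexify.
  have := congr1 (fun X : 'M[Cplx]_m => X i k) (mxR_id m); rewrite !mxE /complexify /= => <-.
  by rewrite CaddE CmulE mulrA.
have hpm t : F t = Phi t \/ F t = Copp (Phi t).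
  have : (F t - Phi t) * (F t + Phi t) = 0 by rewrite -subr_sqr !expr2 hsq subrr.
  move/eqP; rewrite mulf_eq0 => /orP [].
    by rewrite subr_eq0 => /eqP; left.
  by rewrite addr_eq0 => /eqP; right.
have cF : Ccont F := cont_path f (Defs.is_sym m w j) A m Hc hsymt.
have cPhi : Ccont Phi.
  apply: Ccont_det => i k.
  apply: Ccont_mul; first exact: Ccont_const.
  apply: Ccont_add; first exact: Ccont_const.
  apply: Ccont_mul; [exact: Ccont_RC | exact: Ccont_const].
have nzPhi t : Phi t <> Defs.C0.
  by move=> e; move: (hnz t); rewrite /Phi Cdet_det hX1 in e; rewrite e eqxx.
have At0 : At R0 = Rzero.
  apply: functional_extensionality => i; apply: functional_extensionality => k.
  by rewrite /At Rmult_0_l.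
have At1 : At R1 = A.
  apply: functional_extensionality => i; apply: functional_extensionality => k.
  by rewrite /At Rmult_1_l.
have Phi0 : Phi R0 = RC (pow (/2) n).
  rewrite /Phi Cdet_det hX1 /X1 /= RC0 scale0r addr0 detZ det1 mulr1 RC_pow //.
have := branch F Phi cF cPhi hpm nzPhi.
rewrite /F At0 Phi0 /= => Hb.
have {Hb} := Hb H0i H0r (erefl _) (pow_lt _ _ (Rinv_0_lt_compat _ Rlt_0_2)).
rewrite /F At1 => ->.
rewrite /Phi Cdet_det hX1 Cdet_det mxC_sub mxC_id.
have hd : \det (1%:M - Mi) != 0.
  by apply/eqP => e; move: hone; rewrite e mulr0 => /eqP; rewrite eq_sym oner_eq0.
apply: (mulIf hd); rewrite hone.
by rewrite -[Cinv _]/((\det (1%:M - Mi))^-1) mulVf.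
Qed.


End Main.

Close Scope ring_scope.
Open Scope R_scope.

Theorem mainTheorem8
  (n : nat) (w j : Rmat) (B M Minv : Cmat) (g P : Rmat) (f : Rmat -> Cplx) :
  symplectic_form (2 * n) w ->
  positive_polarization (2 * n) n w B ->
  complex_structure_of (2 * n) n j B ->
  unitary_on_E (2 * n) n w B M ->
  Cinvertible n (Csub_m M Cid) ->
  Cmat_eq n n (Cmul_m n M Minv) Cid -> Cmat_eq n n (Cmul_m n Minv M) Cid ->
  is_iota (2 * n) n B M g ->
  Rmat_eq (2 * n) (2 * n) (Rmul_m (2 * n) P (Rsub_m Rid g)) Rid ->
  Rmat_eq (2 * n) (2 * n) (Rmul_m (2 * n) (Rsub_m Rid g) P) Rid ->
  sqrt_det_branch (2 * n) w j f ->
  f (A_of (2 * n) g P j) = Cinv (Cdet n (Csub_m Cid Minv)).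
Proof.
move=> H1 H2 H3 H4 H5 H6 H7 H8 H9 H10 H11.
have e : (2 * n = n + n)%N by rewrite mul2n addnn.
rewrite e in H1 H2 H3 H4 H8 H9 H11 *.
apply: main_nn; eassumption.
Qed.
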